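(* Let $\mu\in\mathbb{R}$, $c\ge 0$, $\sigma>0$, $\eta_c>0$, $\eta_s>0$. Let $u_c^*$ be the optimal value of $$\max_{p_0\in\mathbb{R},\,r\in[0,1]}\; p_0+r\mu-c-\eta_c r^2\sigma^2 \quad\text{subject to}\quad (1-r)\mu-p_0-\eta_s(1-r)^2\sigma^2\ge 0,$$ and let $u_{c,r=0}^*$ be the optimal value of the same problem with $r$ fixed to $0$ (so $u_{c,r=0}^*=\mu-c-\eta_s\sigma^2$). Then $$\Delta:=u_c^*-u_{c,r=0}^*=\sigma^2\frac{\eta_s^2}{\eta_s+\eta_c},$$ and $\Delta$ is increasing in $\sigma$, increasing in $\eta_s$, and decreasing in $\eta_c$.
   Context: Interpretation: a creator (cost $c$) sells an NFT at mint price $p_0$ with royalty rate $r$ to a speculator, who resells it to an end-buyer at the realized valuation $V$ with $\mathbb{E}[V]=\mu$, $\mathrm{Var}(V)=\sigma^2$. Creator profit is $p_0+rV-c$, speculator profit is $(1-r)V-p_0$; both agents have mean-variance utility $\mathbb{E}[\text{profit}]-\eta\,\mathrm{Var}[\text{profit}]$ with risk-aversion coefficients $\eta_c$ (creator) and $\eta_s$ (speculator). The constraint is the speculator's participation constraint. *)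

(* Defs.v *)
From Stdlib Require Import Reals Lra.
Open Scope R_scope.

(* Creator's mean-variance utility: E[p0 + rV - c] - eta_c Var[p0 + rV - c]. *)
Definition creator_util (mu c sigma eta_c p0 r : R) : R :=
  p0 + r * mu - c - eta_c * r ^ 2 * sigma ^ 2.

(* Speculator's participation constraint:
   E[(1-r)V - p0] - eta_s Var[(1-r)V - p0] >= 0. *)
Definition spec_participation (mu sigma eta_s p0 r : R) : Prop :=
  (1 - r) * mu - p0 - eta_s * (1 - r) ^ 2 * sigma ^ 2 >= 0.

Definition is_opt_value (mu c sigma eta_c eta_s v : R) : Prop :=
  (exists p0 r, 0 <= r <= 1 /\ spec_participation mu sigma eta_s p0 r /\
                creator_util mu c sigma eta_c p0 r = v) /\
  (forall p0 r, 0 <= r <= 1 -> spec_participation mu sigma eta_s p0 r ->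
                creator_util mu c sigma eta_c p0 r <= v).

Definition is_opt_value_r0 (mu c sigma eta_c eta_s v : R) : Prop :=
  (exists p0, spec_participation mu sigma eta_s p0 0 /\
              creator_util mu c sigma eta_c p0 0 = v) /\
  (forall p0, spec_participation mu sigma eta_s p0 0 ->
              creator_util mu c sigma eta_c p0 0 <= v).

Definition is_Delta (mu c sigma eta_c eta_s d : R) : Prop :=
  exists u u0, is_opt_value mu c sigma eta_c eta_s u /\
               is_opt_value_r0 mu c sigma eta_c eta_s u0 /\ d = u - u0.

(* Main.v *)
Require Import Defs.
From Stdlib Require Import Reals.
Open Scope R_scope.

From Stdlib Require Import Lra Psatz.

Lemma fbound (es ec r : R) : 0 < es -> 0 < ec ->
  es * ec / (es + ec) <= es * (1 - r) ^ 2 + ec * r ^ 2.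
Proof.
  intros. apply (Rmult_le_reg_r (es + ec)); [lra|].
  unfold Rdiv. rewrite Rmult_assoc, Rinv_l by lra. rewrite Rmult_1_r.
  pose proof (pow2_ge_0 ((es + ec) * r - es)). nra.
Qed.

Definition Uopt mu c sigma ec es := mu - c - sigma ^ 2 * (es * ec / (es + ec)).

Lemma witness (mu c sigma ec es : R) : 0 < ec -> 0 < es ->
  exists p0 r, 0 <= r <= 1 /\ spec_participation mu sigma es p0 r /\
                creator_util mu c sigma ec p0 r = Uopt mu c sigma ec es.
Proof.
  intros Hc He.
  set (r0 := es / (es + ec)).
  exists ((1 - r0) * mu - es * (1 - r0) ^ 2 * sigma ^ 2), r0.
  split; [|split].
  - unfold r0. split.
    + apply Rlt_le, Rdiv_lt_0_compat; lra.
    + apply Rmult_le_reg_r with (es + ec); [lra|]. unfold Rdiv.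
      rewrite Rmult_assoc, Rinv_l by lra. lra.
  - unfold spec_participation. lra.
  - unfold creator_util, Uopt, r0. field. lra.
Qed.

Lemma upper (mu c sigma ec es p0 r : R) : 0 < ec -> 0 < es ->
  spec_participation mu sigma es p0 r ->
  creator_util mu c sigma ec p0 r <= Uopt mu c sigma ec es.
Proof.
  intros Hc He Hp. unfold spec_participation in Hp.
  unfold creator_util, Uopt.
  pose proof (fbound es ec r He Hc).
  assert (0 <= sigma ^ 2) by (apply pow2_ge_0).
  assert (sigma ^ 2 * (es * ec / (es + ec)) <= sigma ^ 2 * (es * (1 - r) ^ 2 + ec * r ^ 2))
    by (apply Rmult_le_compat_l; auto).
  nra.
Qed.

Lemma opt_eq (mu c sigma ec es u : R) : 0 < ec -> 0 < es ->
  is_opt_value mu c sigma ec es u -> u = Uopt mu c sigma ec es.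
Proof.
  intros Hc He [[p0 [r [Hr [Hp Hu]]]] Hmax].
  destruct (witness mu c sigma ec es Hc He) as [q [s [Hs [Hq Hw]]]].
  pose proof (Hmax q s Hs Hq). pose proof (upper mu c sigma ec es p0 r Hc He Hp).
  lra.
Qed.

Lemma opt0_eq (mu c sigma ec es u : R) :
  is_opt_value_r0 mu c sigma ec es u -> u = mu - c - es * sigma ^ 2.
Proof.
  intros [[p0 [Hp Hu]] Hmax].
  pose proof (Hmax (mu - es * sigma ^ 2)).
  unfold spec_participation, creator_util in *. 
  assert (H1 := H ltac:(nra)). nra.
Qed.

Lemma delta_eq (mu c sigma ec es d : R) : 0 < ec -> 0 < es ->
  is_Delta mu c sigma ec es d -> d = sigma ^ 2 * (es ^ 2 / (es + ec)).
Proof.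
  intros Hc He [u [u0 [H1 [H2 H3]]]].
  rewrite (opt_eq _ _ _ _ _ _ Hc He H1), (opt0_eq _ _ _ _ _ _ H2) in H3.
  subst d. unfold Uopt. field. lra.
Qed.

Theorem theorem2 (mu c sigma eta_c eta_s : R)
  (Hc : 0 <= c) (Hsigma : 0 < sigma) (Hetac : 0 < eta_c) (Hetas : 0 < eta_s) :
  (* both optimal values exist *)
  (exists u, is_opt_value mu c sigma eta_c eta_s u) /\
  (exists u0, is_opt_value_r0 mu c sigma eta_c eta_s u0) /\
  (* u_{c,r=0}^* = mu - c - eta_s sigma^2 *)
  (forall u0, is_opt_value_r0 mu c sigma eta_c eta_s u0 ->
     u0 = mu - c - eta_s * sigma ^ 2) /\
  (* closed form of Delta *)
  (forall d, is_Delta mu c sigma eta_c eta_s d ->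
     d = sigma ^ 2 * (eta_s ^ 2 / (eta_s + eta_c))) /\
  (* Delta strictly increasing in sigma *)
  (forall sigma' d d', sigma < sigma' ->
     is_Delta mu c sigma eta_c eta_s d -> is_Delta mu c sigma' eta_c eta_s d' ->
     d < d') /\
  (* Delta strictly increasing in eta_s *)
  (forall eta_s' d d', eta_s < eta_s' ->
     is_Delta mu c sigma eta_c eta_s d -> is_Delta mu c sigma eta_c eta_s' d' ->
     d < d') /\
  (* Delta strictly decreasing in eta_c *)
  (forall eta_c' d d', eta_c < eta_c' ->
     is_Delta mu c sigma eta_c eta_s d -> is_Delta mu c sigma eta_c' eta_s d' ->
     d' < d).
Proof.
  split; [|split; [|split; [|split; [|split; [|split]]]]].
  - exists (Uopt mu c sigma eta_c eta_s). split.
    + apply witness; auto.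
    + intros; apply upper; auto.
  - exists (mu - c - eta_s * sigma ^ 2). split.
    + exists (mu - eta_s * sigma ^ 2). unfold spec_participation, creator_util. split; lra.
    + intros p0 Hp. unfold spec_participation, creator_util in *. lra.
  - intros; apply opt0_eq with eta_c; auto.
  - intros; apply delta_eq with mu c; auto.
  - intros s' d d' Hs H1 H2.
    rewrite (delta_eq _ _ _ _ _ _ Hetac Hetas H1), (delta_eq _ _ _ _ _ _ Hetac Hetas H2).
    apply Rmult_lt_compat_r.
    + apply Rdiv_lt_0_compat; nra.
    + nra.
  - intros e' d d' He H1 H2.
    rewrite (delta_eq _ _ _ _ _ _ Hetac Hetas H1), (delta_eq _ _ _ _ _ _ Hetac (Rlt_trans _ _ _ Hetas He) H2).
    apply Rmult_lt_compat_l; [nra|].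
    apply (Rmult_lt_reg_r ((eta_s + eta_c) * (e' + eta_c))); [nra|].
    replace (eta_s ^ 2 / (eta_s + eta_c) * ((eta_s + eta_c) * (e' + eta_c)))
      with (eta_s ^ 2 * (e' + eta_c)) by (field; lra).
    replace (e' ^ 2 / (e' + eta_c) * ((eta_s + eta_c) * (e' + eta_c)))
      with (e' ^ 2 * (eta_s + eta_c)) by (field; lra).
    assert (0 < eta_s * e' * (e' - eta_s)) by (apply Rmult_lt_0_compat; nra).
    assert (0 < eta_c * (e' - eta_s) * (e' + eta_s)) by (apply Rmult_lt_0_compat; nra).
    nra.
  - intros e' d d' He H1 H2.
    rewrite (delta_eq _ _ _ _ _ _ Hetac Hetas H1), (delta_eq _ _ _ _ _ _ (Rlt_trans _ _ _ Hetac He) Hetas H2).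
    apply Rmult_lt_compat_l; [nra|].
    apply (Rmult_lt_reg_r ((eta_s + eta_c) * (eta_s + e'))); [nra|].
    replace (eta_s ^ 2 / (eta_s + eta_c) * ((eta_s + eta_c) * (eta_s + e')))
      with (eta_s ^ 2 * (eta_s + e')) by (field; lra).
    replace (eta_s ^ 2 / (eta_s + e') * ((eta_s + eta_c) * (eta_s + e')))
      with (eta_s ^ 2 * (eta_s + eta_c)) by (field; lra).
    assert (0 < eta_s ^ 2) by nra. nra.
Qed.
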